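(* Let $\mathcal K=(\mathcal T,\mathcal B)$ be a $\mathcal{BALC}$ knowledge base, $C,D$ $\mathcal{ALC}$ concepts, and $\kappa,\lambda$ contexts with $P_{\mathcal B}(\lambda)>0$. Then \[ P_{\mathcal K}((C\sqsubseteq D)^\kappa\mid\lambda)=\frac{P_{\mathcal K}((C\sqsubseteq D)^{\lambda\wedge\kappa})+P_{\mathcal B}(\lambda)-1}{P_{\mathcal B}(\lambda)}. \]
   Context: $V$ is a finite set of random variables, each with a finite value set; a world $\omega$ assigns a value to each variable. A Bayesian network $\mathcal B$ over $V$ defines $P_{\mathcal{B}}(\omega)=\prod_{X\in V}P(X=\omega(X)\mid \pi(X)=\omega(\pi(X)))$. A primitive context is a set of pairs $(X,x)$, $x$ a value of $X$; $\omega\models\kappa$ iff $\omega(X)=x$ for all $(X,x)\in\kappa$. A complex context is a finite nonempty set of primitive contexts, satisfied by $\omega$ iff $\omega$ satisfies one of them; $\phi\wedge\psi:=\{\kappa\cup\lambda\mid\kappa\in\phi,\lambda\in\psi\}$ (satisfied iff both are). $P_{\mathcal B}(\phi)=\sum_{\omega\models\phi}P_{\mathcal B}(\omega)$. $\mathcal T$ is a finite set of contextual GCIs. A $V$-interpretation $\mathcal{V}=(\Delta^{\mathcal V},\cdot^{\mathcal V},v^{\mathcal V})$ is an $\mathcal{ALC}$ interpretation plus a world; for an $\mathcal{ALC}$ axiom $\alpha$ and context $\phi$, $\mathcal V\models\alpha^\phi$ iff $v^{\mathcal V}\not\models\phi$ or the $\mathcal{ALC}$ interpretation satisfies $\alpha$.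 A probabilistic interpretation $\mathcal P=(\mathcal J,P_{\mathcal J})$ is a finite set of $V$-interpretations with a distribution assigning each positive probability; it is a model of $\mathcal K$ iff every member satisfies all axioms of $\mathcal T$ and $\sum_{\mathcal V\in\mathcal J,\,v^{\mathcal V}=\omega}P_{\mathcal J}(\mathcal V)=P_{\mathcal B}(\omega)$ for every world $\omega$. $P_{\mathcal P}((C\sqsubseteq D)^\phi)=\sum_{\mathcal V\in\mathcal J,\ \mathcal V\models(C\sqsubseteq D)^\phi}P_{\mathcal J}(\mathcal V)$ and $P_{\mathcal K}((C\sqsubseteq D)^\phi)=\inf_{\mathcal P\models\mathcal K}P_{\mathcal P}((C\sqsubseteq D)^\phi)$. For $P_{\mathcal B}(\lambda)>0$: $P_{\mathcal P}((C\sqsubseteq D)^\kappa\mid\lambda)=\frac{1}{P_{\mathcal B}(\lambda)}\sum_{\mathcal V\in\mathcal J,\ v^{\mathcal V}\models\lambda,\ \mathcal V\models(C\sqsubseteq D)^\kappa}P_{\mathcal J}(\mathcal V)$ and $P_{\mathcal K}((C\sqsubseteq D)^\kappa\mid\lambda)=\inf_{\mathcal P\models\mathcal K}P_{\mathcal P}((C\sqsubseteq D)^\kappa\mid\lambda)$. If $\mathcal K$ has no model, all these probabilities are defined to be $1$. *)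

(* Defs.v *)
From HB Require Import structures.
From mathcomp Require Import all_boot all_order all_algebra.
From mathcomp Require Import boolp classical_sets reals.
From Stdlib Require Lists.List.
Unset Printing Implicit Defensive.
Import Order.TTheory GRing.Theory Num.Theory.
Local Open Scope ring_scope.

Section BALC.
Variables (R : realType) (V : finType) (Val : V -> finType).
Variables (CN RN : Type).

Definition world := {dffun forall X : V, Val X}.

(** Primitive contexts: finite sets of pairs (X, x); complex contexts:
    finite sets of primitive contexts. *)
Definition pctx := seq {X : V & Val X}.
Definition cctx := seq pctx.

Definition psat (w : world) (k : pctx) : bool :=
  all (fun p => w (tag p) == tagged p) k.
Definition csat (w : world) (phi : cctx) : bool := has (psat w) phi.
Definition cand (phi psi : cctx) : cctx := [seq k ++ l | k <- phi, l <- psi].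

(** Bayesian networks: a DAG (acyclicity witnessed by a rank function) with
    conditional probability tables depending only on the parents' values. *)
Record BN := {
  par : V -> {set V};
  rk : V -> nat;
  rk_par : forall X Y, Y \in par X -> (rk Y < rk X)%N;
  cpt : forall X : V, world -> Val X -> R;
  cpt_par : forall X (w w' : world),
      (forall Y, Y \in par X -> w Y = w' Y) -> cpt X w = cpt X w';
  cpt_ge0 : forall X w x, 0 <= cpt X w x;
  cpt_sum1 : forall X w, \sum_(x : Val X) cpt X w x = 1 }.

Definition PBw (B : BN) (w : world) : R := \prod_(X : V) cpt B X w (w X).
Definition PB (B : BN) (phi : cctx) : R := \sum_(w : world | csat w phi) PBw B w.

Inductive concept :=
| CAtom of CN | CTop | CBot | CNot of concept
| CAnd of concept & concept | COr of concept & concept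
| CEx of RN & concept | CAll of RN & concept.

Record vinterp := {
  dom : Type;
  dom_inh : dom;
  cint : CN -> dom -> Prop;
  rint : RN -> dom -> dom -> Prop;
  wld : world }.

Fixpoint csem (I : vinterp) (C : concept) : dom I -> Prop :=
  match C with
  | CAtom A => cint I A
  | CTop => fun _ => True
  | CBot => fun _ => False
  | CNot C => fun x => ~ csem I C x
  | CAnd C D => fun x => csem I C x /\ csem I D x
  | COr C D => fun x => csem I C x \/ csem I D x
  | CEx r C => fun x => exists y, rint I r x y /\ csem I C y
  | CAll r C => fun x => forall y, rint I r x y -> csem I C y
  end.

Definition gci_holds (I : vinterp) (C D : concept) : Prop :=
  forall x, csem I C x -> csem I D x.

Record cgci := { lhs : concept; rhs : concept; ctx : cctx }.
Definition tbox := seq cgci.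

Definition vsat (I : vinterp) (C D : concept) (phi : cctx) : Prop :=
  ~~ csat (wld I) phi \/ gci_holds I C D.

Record pinterp := {
  pn : nat;
  pI : 'I_pn -> vinterp;
  pw : 'I_pn -> R;
  pw_gt0 : forall i, 0 < pw i;
  pw_sum1 : \sum_i pw i = 1 }.

Definition is_model (T : tbox) (B : BN) (P : pinterp) : Prop :=
  (forall i, forall a, Stdlib.Lists.List.In a T -> vsat (pI P i) (lhs a) (rhs a) (ctx a)) /\
  (forall w : world, \sum_(i | wld (pI P i) == w) pw P i = PBw B w).

Definition PP (P : pinterp) (C D : concept) (phi : cctx) : R :=
  \sum_(i | `[< vsat (pI P i) C D phi >]) pw P i.

Definition PPcond (B : BN) (P : pinterp) (C D : concept) (k l : pctx) : R :=
  (PB B [:: l])^-1 *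
  \sum_(i | psat (wld (pI P i)) l && `[< vsat (pI P i) C D [:: k] >]) pw P i.

Definition PK (T : tbox) (B : BN) (C D : concept) (phi : cctx) : R :=
  if pselect (exists P, is_model T B P)
  then inf [set r | exists P, is_model T B P /\ r = PP P C D phi]
  else 1.

Definition PKcond (T : tbox) (B : BN) (C D : concept) (k l : pctx) : R :=
  if pselect (exists P, is_model T B P)
  then inf [set r | exists P, is_model T B P /\ r = PPcond B P C D k l]
  else 1.

End BALC.

Arguments PB {R V Val} B phi.
Arguments PK {R V Val CN RN} T B C D phi.
Arguments PKcond {R V Val CN RN} T B C D k l.
Arguments cand {V Val} phi psi.
Arguments ctx {V Val CN RN} c.

(* Main.v *)
From HB Require Import structures.
From mathcomp Require Import all_boot all_order all_algebra.
From mathcomp Require Import boolp classical_sets reals.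
From mathcomp Require Import ring.
Import Order.TTheory GRing.Theory Num.Theory.
Local Open Scope ring_scope.
Local Open Scope classical_set_scope.

Lemma inf_mono_le (R : realType) (f : R -> R) (S : set R) :
  (forall x y, x <= y -> f x <= f y) -> S !=set0 -> has_lbound S ->
  f (inf S) <= inf (f @` S).
Proof.
move=> fm [s Ss] [b Hb].
apply: lb_le_inf; first by exists (f s), s.
move=> _ [y Sy <-]; apply: fm.
by apply: ge_inf => //; exists b.
Qed.

Lemma inf_affine (R : realType) (f g : R -> R) (S : set R) :
  (forall x y, x <= y -> f x <= f y) ->
  (forall x y, x <= y -> g x <= g y) ->
  (forall x, g (f x) = x) -> (forall x, f (g x) = x) ->
  S !=set0 -> has_lbound S ->
  inf (f @` S) = f (inf S).
Proof.
move=> fm gm gf fg S0 [b Hb].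
have S'0 : (f @` S) !=set0 by case: S0 => s Ss; exists (f s), s.
have S'b : has_lbound (f @` S).
  by exists (f b) => _ [y Sy <-]; apply: fm; apply: Hb.
apply/le_anti/andP; split; last by apply: inf_mono_le => //; exists b.
have := @inf_mono_le _ g _ gm S'0 S'b.
rewrite image_comp.
have -> : (g \o f) @` S = S.
  by rewrite (eq_imagel (f' := id)) ?image_id // => x _ /=.
by move/fm; rewrite fg.
Qed.
Require Import Defs.
Arguments is_model {R V Val CN RN}.
Arguments PP {R V Val CN RN}.
Arguments PPcond {R V Val CN RN}.
Arguments psat {V Val}.
Arguments csat {V Val}.
Arguments vsat {V Val CN RN}.
Arguments pI {R V Val CN RN}.
Arguments pw {R V Val CN RN}.
Arguments pw_sum1 {R V Val CN RN}.
Arguments pw_gt0 {R V Val CN RN}.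
Arguments wld {V Val CN RN}.
Arguments PBw {R V Val}.
Arguments gci_holds {V Val CN RN}.

Lemma key (R : realType) (V : finType) (Val : V -> finType)
  (CN RN : Type) (T : tbox V Val CN RN) (B : BN R V Val)
  (C D : concept CN RN) (kappa lambda : pctx V Val) (P : pinterp R V Val CN RN) :
  is_model T B P ->
  PP P C D (cand [:: lambda] [:: kappa]) =
  (1 - PB B [:: lambda]) +
  \sum_(i | psat (wld (pI P i)) lambda && `[< vsat (pI P i) C D [:: kappa] >]) pw P i.
Proof.
move=> [_ Hw].
set a := fun i => psat (wld (pI P i)) lambda.
have Ha : \sum_(i | a i) pw P i = PB B [:: lambda].
  rewrite /PB (partition_big (fun i => wld (pI P i)) (fun w => csat w [:: lambda])); last first.
    by move=> i; rewrite /csat /= orbF.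
  apply: eq_bigr => w; rewrite /csat /= orbF => Hwl.
  rewrite -Hw; apply: eq_bigl => i; rewrite /a.
  by case: eqP => [->|]; rewrite ?Hwl ?andbF.
have Hna : \sum_(i | ~~ a i) pw P i = 1 - PB B [:: lambda].
  rewrite -Ha -(pw_sum1 P) [in RHS](bigID a) /=.
  by rewrite addrC addrK.
rewrite /PP (bigID a) /= addrC -Hna; congr (_ + _).
  apply: eq_bigl => i.
  case Hai: (a i); rewrite ?andbF ?andbT //=.
  apply/asboolP; left; rewrite /csat /cand /= orbF /psat all_cat.
  by move: Hai; rewrite /a /psat => ->.
apply: eq_bigl => i; rewrite andbC.
have Hs : csat (wld (pI P i)) (cand [:: lambda] [:: kappa]) =
  a i && csat (wld (pI P i)) [:: kappa].
  by rewrite /csat /cand /= !orbF /psat all_cat.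
rewrite /a; case Hai: (psat _ lambda) => //=.
apply/idP/idP => /asboolP H; apply/asboolP; move: H; rewrite /vsat Hs /a Hai //.
Qed.

Arguments key {R V Val CN RN T B C D kappa lambda P}.

Theorem mainTheorem11 (R : realType) (V : finType) (Val : V -> finType)
  (CN RN : Type) (T : tbox V Val CN RN) (B : BN R V Val)
  (C D : concept CN RN) (kappa lambda : pctx V Val) :
  all (fun a => ctx a != [::]) T ->
  0 < PB B [:: lambda] ->
  PKcond T B C D kappa lambda =
  (PK T B C D (cand [:: lambda] [:: kappa]) + PB B [:: lambda] - 1)
    / PB B [:: lambda].
Proof.
move=> _ p0.
set p := PB B [:: lambda].
have pn0 : p != 0 by rewrite gt_eqF.
rewrite /PKcond /PK; destruct (pselect (exists P, is_model T B P)) as [Hex|Hn]; last first.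
  by rewrite (addrC 1 p) addrK divff.
set f := fun x : R => (x + p - 1) / p.
set g := fun y : R => y * p - p + 1.
set S := [set r | exists P, is_model T B P /\ r = PP P C D (cand [:: lambda] [:: kappa])].
have -> : [set r | exists P, is_model T B P /\ r = PPcond B P C D kappa lambda] = f @` S.
  apply: funext => r; apply: propext; split.
    move=> [P [HP ->]]; exists (PP P C D (cand [:: lambda] [:: kappa])).
      by exists P.
    rewrite /f (key HP) /PPcond -/p.
    by rewrite mulrC; congr (_ * _); ring.
  by move=> [_ [P [HP ->]] <-]; exists P; split => //;
    rewrite /f (key HP) /PPcond -/p;
    rewrite mulrC; congr (_ * _); ring.
have fm : forall x y, x <= y -> f x <= f y.
  by move=> x y xy; rewrite /f ler_pM2r ?invr_gt0 // lerD2r lerD2r.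
have gm : forall x y, x <= y -> g x <= g y.
  by move=> x y xy; rewrite /g lerD2r lerD2r ler_pM2r.
have gf : forall x, g (f x) = x.
  by move=> x; rewrite /g /f mulfVK //; ring.
have fg : forall x, f (g x) = x.
  move=> x; rewrite /f /g.
  have -> : x * p - p + 1 + p - 1 = x * p by ring.
  by rewrite mulfK.
have S0 : S !=set0.
  by case: Hex => P HP; exists (PP P C D (cand [:: lambda] [:: kappa])), P.
have Sb : has_lbound S.
  exists 0 => _ [P [_ ->]]; rewrite /PP sumr_ge0 // => i _.
  exact/ltW/pw_gt0.
exact: (@inf_affine R f g S fm gm gf fg S0 Sb).
Qed.
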